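(* In the setting described in the context, suppose that $$\sum_{x\in A}\alpha_x<\sum_{y\in N(A)}\beta_y\qquad\text{for all nonempty } A\subseteq\mathcal X,$$ where $N(A)=\bigcup_{x\in A}N_x$. Then the graph $\mathcal L$ is connected.
   Context: $\mathcal X$ is a finite set of units, $\mathcal G=(\mathcal X,\mathcal E)$ a directed graph, $N_x=\{y:(x,y)\in\mathcal E\}$, $\alpha_x,\beta_x$ non-negative integers. An allocation state is a matrix $W\in\mathbb N^{\mathcal X\times\mathcal X}$ with $W_{xy}=0$ whenever $(x,y)\notin\mathcal E$, $W^x:=\sum_yW_{xy}=\alpha_x$ for all $x$, and $W_y:=\sum_xW_{xy}\le\beta_y$ for all $y$; $\mathcal W$ is the set of allocation states and $e_{xy}$ the matrix unit. $\mathcal L$ is the graph on $\mathcal W$ in which $W$ and $W'$ are adjacent iff $W'=W-e_{xy}+e_{xy'}$ for some $x$ and some $y\ne y'$ with $W_{xy}>0$, $y'\in N_x$, $W_{y'}<\beta_{y'}$ (these are exactly the positive-rate transitions of the paper's noisy best-response storage dynamics restricted to $\mathcal W$, under its standing assumption that unit activation rates are $\nu_x=\nu\alpha_x$ with $\nu>0$). *)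

(* Defs.v *)
From mathcomp Require Import all_boot.
From Stdlib Require Import Relations.Relation_Operators.
Set Implicit Arguments. Unset Strict Implicit. Unset Printing Implicit Defensive.

Section Defs.
Variable X : finType.

Definition mx := {ffun X * X -> nat}.

Definition emat (x y : X) : mx := [ffun p => nat_of_bool (p == (x, y))].

Definition rowsum (W : mx) (x : X) : nat := \sum_(y : X) W (x, y).
Definition colsum (W : mx) (y : X) : nat := \sum_(x : X) W (x, y).

Definition nbhd (E : rel X) (A : {set X}) : {set X} :=
  [set y | [exists x in A, E x y]].

Definition alloc (E : rel X) (alpha beta : X -> nat) (W : mx) : Prop :=
  (forall x y, ~~ E x y -> W (x, y) = 0) /\
  (forall x, rowsum W x = alpha x) /\
  (forall y, colsum W y <= beta y).

Definition step (E : rel X) (beta : X -> nat) (W W' : mx) : Prop :=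
  exists x y y', y != y' /\ 0 < W (x, y) /\ E x y' /\ colsum W y' < beta y' /\
    W' = [ffun p => W p - emat x y p + emat x y' p].

Definition Ladj (E : rel X) (alpha beta : X -> nat) (W W' : mx) : Prop :=
  alloc E alpha beta W /\ alloc E alpha beta W' /\ step E beta W W'.

Definition L_connected (E : rel X) (alpha beta : X -> nat) : Prop :=
  forall W W', alloc E alpha beta W -> alloc E alpha beta W' ->
    clos_refl_trans mx (Ladj E alpha beta) W W'.

End Defs.

(* Main.v *)
Require Import Defs.
From mathcomp Require Import all_boot zify.
From Stdlib Require Import Relations.Relation_Operators.
Set Implicit Arguments. Unset Strict Implicit. Unset Printing Implicit Defensive.

Definition mv {X : finType} (W : mx X) (u a b : X) : mx X :=
  [ffun p => W p - emat u a p + emat u b p].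

Definition Phi {X : finType} (W V : mx X) : nat := \sum_(p : X * X) (W p - V p).

Lemma ematE {X : finType} (u a : X) p : emat u a p = (p == (u, a)).
Proof. by rewrite /emat ffunE. Qed.

Lemma mv_eq {X : finType} (W : mx X) u a b p : 0 < W (u, a) ->
  mv W u a b p + emat u a p = W p + emat u b p.
Proof.
move=> Hp; rewrite /mv ffunE !ematE.
case: (eqVneq p (u, a)) => [->|_] /=; lia.
Qed.

Lemma sum_emat_row {X : finType} (u b x : X) :
  \sum_(y : X) emat u b (x, y) = (x == u).
Proof.
rewrite (bigD1 b) //= big1 ?addn0; first by rewrite ematE xpair_eqE eqxx andbT.
by move=> y Hy; rewrite ematE xpair_eqE (negbTE Hy) andbF.
Qed.

Lemma sum_emat_col {X : finType} (u b y : X) :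
  \sum_(x : X) emat u b (x, y) = (y == b).
Proof.
rewrite (bigD1 u) //= big1 ?addn0; first by rewrite ematE xpair_eqE eqxx.
by move=> x Hx; rewrite ematE xpair_eqE (negbTE Hx).
Qed.

Lemma sum_emat_all {X : finType} (u b : X) :
  \sum_(p : X * X) emat u b p = 1.
Proof.
rewrite (bigD1 (u, b)) //= big1 ?addn0; first by rewrite ematE eqxx.
by move=> p Hp; rewrite ematE (negbTE Hp).
Qed.

Lemma rowsum_mv {X : finType} (W : mx X) u a b x : 0 < W (u, a) ->
  rowsum (mv W u a b) x = rowsum W x.
Proof.
move=> Hp.
have: \sum_y (mv W u a b (x, y) + emat u a (x, y)) =
      \sum_y (W (x, y) + emat u b (x, y)) by apply: eq_bigr => y _; apply: mv_eq.
rewrite !big_split /= !sum_emat_row /rowsum => H; lia.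
Qed.

Lemma colsum_mv {X : finType} (W : mx X) u a b y : 0 < W (u, a) ->
  colsum (mv W u a b) y + (y == a) = colsum W y + (y == b).
Proof.
move=> Hp.
have: \sum_x (mv W u a b (x, y) + emat u a (x, y)) =
      \sum_x (W (x, y) + emat u b (x, y)) by apply: eq_bigr => x _; apply: mv_eq.
by rewrite !big_split /= !sum_emat_col /colsum.
Qed.

Lemma alloc_mv {X : finType} (E : rel X) alpha beta (W : mx X) u a b :
  alloc E alpha beta W -> 0 < W (u, a) -> E u b -> colsum W b < beta b ->
  alloc E alpha beta (mv W u a b).
Proof.
move=> [Hs [Hr Hc]] Hp He Hb; split; [|split].
- move=> x y Hxy; rewrite /mv ffunE !ematE Hs //.
  case: (eqVneq (x, y) (u, b)) => [[Ex Ey]|_]; first by rewrite Ex Ey He in Hxy.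
  by rewrite addn0.
- by move=> x; rewrite rowsum_mv.
- move=> y; have := colsum_mv b y Hp; have := Hc y.
  case: (eqVneq y b) => [->|Hyb] /=; lia.
Qed.

Lemma alloc_pos {X : finType} (E : rel X) alpha beta (W : mx X) x y :
  alloc E alpha beta W -> 0 < W (x, y) -> E x y.
Proof.
move=> [Hs _] Hp; apply/negPn/negP => /Hs H; by rewrite H in Hp.
Qed.

Lemma Ladj_mv {X : finType} (E : rel X) alpha beta (W : mx X) u a b :
  alloc E alpha beta W -> 0 < W (u, a) -> E u b -> a != b -> colsum W b < beta b ->
  Ladj E alpha beta W (mv W u a b).
Proof.
move=> HW Hp He Hab Hb; split; [done | split; first exact: alloc_mv].
by exists u, a, b.
Qed.

Lemma Ladj_sym {X : finType} (E : rel X) alpha beta (W W' : mx X) :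
  Ladj E alpha beta W W' -> Ladj E alpha beta W' W.
Proof.
move=> [HW [HW' [u [a [b [Hab [Hp [He [Hb ->]]]]]]]]].
have Hp' : 0 < mv W u a b (u, b) by rewrite /mv ffunE !ematE eqxx; lia.
have Ha : colsum (mv W u a b) a < beta a.
  have := colsum_mv b a Hp; rewrite eqxx (negbTE Hab) => H.
  have [_ [_ Hc]] := HW; have := Hc a; lia.
suff HW2 : W = mv (mv W u a b) u b a.
  rewrite [X in Ladj _ _ _ _ X]HW2; apply: Ladj_mv => //; [exact: alloc_mv | exact: alloc_pos HW Hp| by rewrite eq_sym].
apply/ffunP => p; rewrite /mv /emat !ffunE.
case: (eqVneq p (u, a)) => [->|Hpa].
  by rewrite xpair_eqE eqxx (negbTE Hab) /= addn0 subn0 subnK.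
by rewrite /= subn0 addn0 addnK.
Qed.

Lemma sum_lt_exists {I : finType} (f g : I -> nat) i :
  \sum_j f j = \sum_j g j -> f i < g i -> exists j, g j < f j.
Proof.
move=> Hs Hi; case: (boolP [exists j, g j < f j]) => [/existsP //|/existsPn H].
have Hle : forall j, f j <= g j by move=> j; rewrite leqNgt H.
have : \sum_j f j < \sum_j g j.
  rewrite (bigD1 i) //= [X in _ < X](bigD1 i) //=.
  by rewrite -addSn leq_add // leq_sum.
by rewrite Hs ltnn.
Qed.

Lemma Phi_dec {X : finType} (W V : mx X) u a b :
  V (u, a) < W (u, a) -> W (u, b) < V (u, b) -> a != b ->
  Phi (mv W u a b) V < Phi W V.
Proof.
move=> Hex Hdf Hab.
have Hpos : 0 < W (u, a) by lia.
have H : forall p, (mv W u a b p - V p) + emat u a p <= W p - V p.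
  move=> p; have := mv_eq b p Hpos; rewrite !ematE.
  case: (eqVneq p (u, a)) => [->|Hpa].
    rewrite xpair_eqE eqxx (negbTE Hab) /=; lia.
  case: (eqVneq p (u, b)) => [->|Hpb] /=; lia.
have : \sum_p ((mv W u a b p - V p) + emat u a p) <= \sum_p (W p - V p)
  by apply: leq_sum => p _; apply: H.
by rewrite big_split /= sum_emat_all /Phi addn1.
Qed.

Lemma Phi_le {X : finType} (W V : mx X) u a b :
  V (u, a) < W (u, a) -> a != b ->
  Phi (mv W u a b) V <= Phi W V.
Proof.
move=> Hex Hab.
have Hpos : 0 < W (u, a) by lia.
have H : forall p, (mv W u a b p - V p) + emat u a p <= (W p - V p) + emat u b p.
  move=> p; have := mv_eq b p Hpos; rewrite !ematE.
  case: (eqVneq p (u, a)) => [->|Hpa].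
    rewrite xpair_eqE eqxx (negbTE Hab) /=; lia.
  case: (eqVneq p (u, b)) => [->|Hpb] /=; lia.
have : \sum_p ((mv W u a b p - V p) + emat u a p) <= \sum_p ((W p - V p) + emat u b p)
  by apply: leq_sum => p _; apply: H.
by rewrite !big_split /= !sum_emat_all /Phi leq_add2r.
Qed.

Lemma Phi_eq {X : finType} (W V : mx X) u a b :
  0 < W (u, a) -> 0 < V (u, a) ->
  Phi (mv W u a b) (mv V u a b) = Phi W V.
Proof.
move=> HW HV; apply: eq_bigr => p _.
have := mv_eq b p HW; have := mv_eq b p HV; lia.
Qed.

Lemma lt_mv {X : finType} (W V : mx X) u a b p :
  0 < W (u, a) -> 0 < V (u, a) ->
  (mv W u a b p < mv V u a b p) = (W p < V p).
Proof.
move=> HW HV; have := mv_eq b p HW; have := mv_eq b p HV.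
move=> H1 H2; apply/idP/idP; lia.
Qed.

Lemma sum_colsum {X : finType} (E : rel X) alpha beta (W : mx X) :
  alloc E alpha beta W -> \sum_y colsum W y = \sum_x alpha x.
Proof.
move=> [_ [Hr _]]; rewrite /colsum exchange_big; apply: eq_bigr => x _; exact: Hr.
Qed.

Definition grel {X : finType} (E : rel X) (W : mx X) : rel X :=
  [rel a b | [exists u, (0 < W (u, a)) && E u b]].

Notation RR E alpha beta := (clos_refl_trans _ (Ladj E alpha beta)).

Lemma R_sym {X : finType} (E : rel X) alpha beta (W V : mx X) :
  RR E alpha beta W V -> RR E alpha beta V W.
Proof.
elim=> [x y H|x|x y z _ H1 _ H2].
- by apply: rt_step; apply: Ladj_sym.
- exact: rt_refl.
- exact: rt_trans H2 H1.
Qed.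

Lemma sum_sub {I : finType} (A B : {set I}) (f : I -> nat) :
  A \subset B -> \sum_(i in A) f i <= \sum_(i in B) f i.
Proof.
move=> H; rewrite big_mkcond [X in _ <= X]big_mkcond; apply: leq_sum => i _.
by case: ifP => HA //; rewrite (subsetP H _ HA).
Qed.

Lemma sum_sub_all {I : finType} (A : {set I}) (f : I -> nat) :
  \sum_(i in A) f i <= \sum_i f i.
Proof.
rewrite big_mkcond; apply: leq_sum => i _; by case: ifP.
Qed.

Lemma PA' {X : finType} (E : rel X) alpha beta (W V : mx X) u z :
  alloc E alpha beta W -> alloc E alpha beta V ->
  W (u, z) < V (u, z) -> colsum W z < beta z ->
  exists W1, Ladj E alpha beta W W1 /\ Phi W1 V < Phi W V.
Proof.
move=> HW HV Hdf Hz.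
have Hrs : \sum_y W (u, y) = \sum_y V (u, y).
  by have [_ [H1 _]] := HW; have [_ [H2 _]] := HV; rewrite -/(rowsum W u) -/(rowsum V u) H1 H2.
have [a Ha] := sum_lt_exists Hrs Hdf.
have Haz : a != z by apply/eqP => Eaz; rewrite Eaz in Ha; lia.
have Ez : E u z by apply: (alloc_pos HV); lia.
exists (mv W u a z); split.
- apply: Ladj_mv => //; lia.
- exact: Phi_dec.
Qed.

Lemma PA {X : finType} (E : rel X) alpha beta (W V : mx X) z :
  alloc E alpha beta W -> alloc E alpha beta V ->
  colsum W z < colsum V z ->
  exists W1, Ladj E alpha beta W W1 /\ Phi W1 V < Phi W V.
Proof.
move=> HW HV Hc.
case: (boolP [exists u, W (u, z) < V (u, z)]) => [/existsP [u Hu]|/existsPn Hn].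
  apply: (PA' HW HV Hu); have [_ [_ H]] := HV; have := H z; lia.
have : colsum V z <= colsum W z by apply: leq_sum => u _; rewrite leqNgt Hn.
lia.
Qed.

Lemma hall_hole {X : finType} (E : rel X) alpha beta (W : mx X) y0 :
  (forall A : {set X}, A != set0 ->
     \sum_(x in A) alpha x < \sum_(y in nbhd E A) beta y) ->
  alloc E alpha beta W -> 0 < colsum W y0 ->
  exists h, connect (grel E W) y0 h /\ colsum W h < beta h.
Proof.
move=> Hh HW Hc.
case: (boolP [exists h, connect (grel E W) y0 h && (colsum W h < beta h)]).
  by move=> /existsP [h /andP [H1 H2]]; exists h.
move=> /existsPn Hno; exfalso.
set Q := [set z | connect (grel E W) y0 z].
set A := [set u | [exists z in Q, 0 < W (u, z)]].
have Hsat : forall z, z \in Q -> beta z <= colsum W z.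
  move=> z; rewrite inE => Hz; have := Hno z; rewrite Hz /= -leqNgt; done.
have A0 : A != set0.
  case: (boolP [exists u, 0 < W (u, y0)]) => [/existsP [u Hu]|/existsPn Hn].
    apply/set0Pn; exists u; rewrite inE; apply/existsP; exists y0.
    by rewrite inE connect0 Hu.
  have : colsum W y0 = 0 by apply: big1 => u _; have := Hn u; lia.
  lia.
have Hn : nbhd E A \subset Q.
  apply/subsetP => y; rewrite inE => /existsP [u /andP [HuA Euy]].
  rewrite inE in HuA; move/existsP: HuA => [z /andP [HzQ Hpos]].
  rewrite inE in HzQ; rewrite inE; apply: connect_trans HzQ _; apply: connect1.
  by rewrite /=; apply/existsP; exists u; rewrite Hpos Euy.
have H1 := Hh A A0.
have H2 := sum_sub beta Hn.
have H3 : \sum_(y in Q) beta y <= \sum_(y in Q) colsum W y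
  by apply: leq_sum => y Hy; apply: Hsat.
have H4 : \sum_(y in Q) colsum W y = \sum_u \sum_(y in Q) W (u, y)
  by rewrite /colsum exchange_big.
have H5 : \sum_u \sum_(y in Q) W (u, y) <= \sum_(u in A) alpha u.
  rewrite [X in _ <= X]big_mkcond; apply: leq_sum => u _; case: ifP => HuA.
    have [_ [Hr _]] := HW; rewrite -(Hr u); exact: sum_sub_all.
  rewrite leqn0 sum_nat_eq0; apply/forall_inP => y Hy.
  rewrite -leqn0 leqNgt; apply/negP => Hp.
  by move/negbT: HuA; rewrite inE => /existsPn /(_ y); rewrite Hy Hp.
lia.
Qed.

Lemma path_mono {T : eqType} (e e' : rel T) x s :
  uniq (x :: s) -> (forall a b, a != last x s -> e a b -> e' a b) ->
  path e x s -> path e' x s.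
Proof.
elim: s x => [//| y s IH] x /= /andP [Hx Hu] He /andP [Hxy Hp].
have Hxl : x != last y s.
  apply/eqP => Exl; move: Hx; rewrite Exl; move/negP; apply; exact: mem_last.
rewrite (He _ _ Hxl Hxy) /=; apply: IH => //.
Qed.

Lemma PB {X : finType} (E : rel X) alpha beta (p : seq X) :
  forall (W V : mx X) x y0,
  alloc E alpha beta W -> alloc E alpha beta V ->
  (forall z, colsum W z = colsum V z) -> W (x, y0) < V (x, y0) ->
  path (grel E W) y0 p -> uniq (y0 :: p) ->
  colsum W (last y0 p) < beta (last y0 p) ->
  exists W1 V1, alloc E alpha beta W1 /\ alloc E alpha beta V1 /\
    RR E alpha beta W W1 /\ RR E alpha beta V V1 /\ Phi W1 V1 < Phi W V.
Proof.
elim/last_ind: p => [|p h IH] W V x y0 HW HV Hcs Hdf Hpath Hu Hhole.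
  have [W1 [HL Hlt]] := PA' HW HV Hdf Hhole.
  exists W1, V; split; first by have [_ [H _]] := HL.
  by split => //; split; [exact: rt_step | split => //; exact: rt_refl].
rewrite rcons_path in Hpath; move/andP: Hpath => [Hp' /existsP [u /andP [Hpos Euh]]].
rewrite last_rcons in Hhole.
set c := last y0 p in Hpos *.
rewrite -rcons_cons rcons_uniq in Hu; move/andP: Hu => [Hh Hu].
have Hch : c != h.
  apply/eqP => Ech; move: Hh; rewrite -Ech; move/negP; apply; exact: mem_last.
case: (ltnP (V (u, c)) (W (u, c))) => Huc.
- have HL := Ladj_mv HW Hpos Euh Hch Hhole.
  have HW' : alloc E alpha beta (mv W u c h) by have [_ [H _]] := HL.
  have Hc' : colsum (mv W u c h) c < colsum V c.
    have := colsum_mv h c Hpos; rewrite eqxx (negbTE Hch) -Hcs; lia.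
  have [W1 [HL1 Hlt]] := PA HW' HV Hc'.
  exists W1, V; split; first by have [_ [H _]] := HL1.
  split => //; split; first by apply: rt_trans (rt_step _ _ _ _ HL) (rt_step _ _ _ _ HL1).
  split; first exact: rt_refl.
  have := Phi_le Huc Hch; lia.
- have HposV : 0 < V (u, c) by lia.
  have HholeV : colsum V h < beta h by rewrite -Hcs.
  have HL := Ladj_mv HW Hpos Euh Hch Hhole.
  have HLV := Ladj_mv HV HposV Euh Hch HholeV.
  have HW' : alloc E alpha beta (mv W u c h) by have [_ [H _]] := HL.
  have HV' : alloc E alpha beta (mv V u c h) by have [_ [H _]] := HLV.
  have Hcs' : forall z, colsum (mv W u c h) z = colsum (mv V u c h) z.
    move=> z; have := colsum_mv h z Hpos; have := colsum_mv h z HposV.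
    rewrite Hcs; lia.
  have Hdf' : mv W u c h (x, y0) < mv V u c h (x, y0) by rewrite lt_mv.
  have Hp'' : path (grel E (mv W u c h)) y0 p.
    apply: (path_mono Hu _ Hp') => a b Hac /existsP [u' /andP [Hp1 He1]].
    apply/existsP; exists u'; rewrite He1 andbT.
    have := mv_eq h (u', a) Hpos; rewrite !ematE xpair_eqE (negbTE Hac) andbF /=.
    lia.
  have Hhole' : colsum (mv W u c h) c < beta c.
    have := colsum_mv h c Hpos; rewrite eqxx (negbTE Hch).
    have [_ [_ Hb]] := HW; have := Hb c; lia.
  have [W1 [V1 [HW1 [HV1 [R1 [R2 Hlt]]]]]] := IH _ _ _ _ HW' HV' Hcs' Hdf' Hp'' Hu Hhole'.
  exists W1, V1; do 2 (split => //); split; last split.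
  + exact: rt_trans (rt_step _ _ _ _ HL) R1.
  + exact: rt_trans (rt_step _ _ _ _ HLV) R2.
  + by rewrite -(Phi_eq h Hpos HposV).
Qed.

Lemma progress {X : finType} (E : rel X) alpha beta (W V : mx X) :
  (forall A : {set X}, A != set0 ->
     \sum_(x in A) alpha x < \sum_(y in nbhd E A) beta y) ->
  alloc E alpha beta W -> alloc E alpha beta V -> W != V ->
  exists W1 V1, alloc E alpha beta W1 /\ alloc E alpha beta V1 /\
    RR E alpha beta W W1 /\ RR E alpha beta V V1 /\ Phi W1 V1 < Phi W V.
Proof.
move=> Hh HW HV Hne.
case: (boolP [forall z, colsum W z == colsum V z]) => [/forallP Hcs|/forallPn [z0 Hz0]].
- have Hcs' : forall z, colsum W z = colsum V z by move=> z; apply/eqP.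
  have [p Hp] : exists p, W p != V p.
    case: (boolP [exists p, W p != V p]) => [/existsP //|/existsPn Hn].
    have HWV : W = V by apply/ffunP => p; have := Hn p; rewrite negbK => /eqP.
    by rewrite HWV eqxx in Hne.
  case: p Hp => x y Hp.
  have [y0 Hy0] : exists y0, W (x, y0) < V (x, y0).
    case: (ltngtP (W (x, y)) (V (x, y))) => [H|H|H]; first by exists y.
      have Hrs : \sum_j V (x, j) = \sum_j W (x, j).
        by have [_ [H1 _]] := HW; have [_ [H2 _]] := HV; rewrite -/(rowsum W x) -/(rowsum V x) H1 H2.
      exact: sum_lt_exists Hrs H.
    by rewrite H eqxx in Hp.
  have Hc0 : 0 < colsum W y0.
    rewrite Hcs' /colsum (bigD1 x) //=; lia.
  have [h [Hconn Hhole]] := hall_hole Hh HW Hc0.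
  move/connectP: Hconn => [p Hpath Hlast].
  move: Hlast; case: (shortenP Hpath) => p' Hp' Hu _ Hlast.
  apply: (PB HW HV Hcs' Hy0 Hp' Hu); by rewrite -Hlast.
- have [z Hz] : exists z, colsum W z < colsum V z.
    case: (ltngtP (colsum W z0) (colsum V z0)) => [H|H|H]; first by exists z0.
      have Hs : \sum_y colsum V y = \sum_y colsum W y by rewrite (sum_colsum HW) (sum_colsum HV).
      exact: sum_lt_exists Hs H.
    by rewrite H eqxx in Hz0.
  have [W1 [HL Hlt]] := PA HW HV Hz.
  exists W1, V; split; first by have [_ [H _]] := HL.
  by split => //; split; [exact: rt_step | split => //; exact: rt_refl].
Qed.

Lemma main_ind {X : finType} (E : rel X) alpha beta (n : nat) :
  (forall A : {set X}, A != set0 ->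
     \sum_(x in A) alpha x < \sum_(y in nbhd E A) beta y) ->
  forall W V : mx X, alloc E alpha beta W -> alloc E alpha beta V ->
  Phi W V < n -> RR E alpha beta W V.
Proof.
move=> Hh; elim: n => [//|n IH] W V HW HV Hn.
case: (eqVneq W V) => [->|Hne]; first exact: rt_refl.
have [W1 [V1 [HW1 [HV1 [R1 [R2 Hlt]]]]]] := progress Hh HW HV Hne.
apply: rt_trans R1 _; apply: rt_trans (IH _ _ HW1 HV1 _) (R_sym R2); lia.
Qed.

Theorem proposition3 (X : finType) (E : rel X) (alpha beta : X -> nat) :
  (forall A : {set X}, A != set0 ->
     \sum_(x in A) alpha x < \sum_(y in nbhd E A) beta y) ->
  L_connected E alpha beta.
Proof.
move=> Hh W V HW HV; exact: (main_ind Hh HW HV (ltnSn _)).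
Qed.
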